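(* Let $\mathbb{T}$ be a time scale, let $I\subseteq\mathbb{R}$ be an interval, write $I_{\mathbb{T}}:=I\cap\mathbb{T}$, and let $t_0\in I_{\mathbb{T}}$. Let $p,q\in\mathbb{R}$ be constants and put $k:=1+|p|+|q|$. If $y$ is any solution on $I_{\mathbb{T}}$ of the homogeneous dynamic equation $$y^{\Delta\Delta}(t)+p\,y^{\Delta}(t)+q\,y(t)=0,$$ then $$\|y(t)\|_2\le \|y(t_0)\|_2\, e_k(t,t_0)\qquad\text{for all } t\in I_{\mathbb{T}},\ t\ge t_0,$$ where $\|y(t)\|_2:=\big((y(t))^2+(y^\Delta(t))^2\big)^{1/2}$.
   Context: A time scale $\mathbb{T}$ is a nonempty closed subset of $\mathbb{R}$. The forward jump operator is $\sigma(t):=\inf\{s\in\mathbb{T}:s>t\}$, the graininess is $\mu(t):=\sigma(t)-t$, and $y^\sigma:=y\circ\sigma$. The delta derivative is $y^\Delta(t):=\lim_{s\to t}\frac{y^\sigma(t)-y(s)}{\sigma(t)-s}$ (for $t\in\mathbb{T}^\kappa$), and $y^{\Delta\Delta}=(y^\Delta)^\Delta$. For a right-dense continuous function $\ell$ with $1+\mu(t)\ell(t)\neq0$, the time-scale exponential $e_\ell(\cdot,t_0)$ is the unique solution of $\phi^\Delta(t)=\ell(t)\phi(t)$, $\phi(t_0)=1$; for a positive constant $k$ this applies. *)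

(* Defs.v *)
From HB Require Import structures.
From mathcomp Require Import all_boot all_order all_algebra.
From mathcomp Require Import all_classical all_reals all_analysis.
Set Implicit Arguments. Unset Strict Implicit. Unset Printing Implicit Defensive.
Import Order.TTheory GRing.Theory Num.Theory numFieldNormedType.Exports.
Local Open Scope classical_set_scope.
Local Open Scope ring_scope.

Section TimeScale.
Variable R : realType.

Definition time_scale (T : set R) : Prop := T !=set0 /\ closed T.

Definition fjump (T : set R) (t : R) : R :=
  if pselect (exists s, T s /\ t < s) is left _
  then inf [set s | T s /\ t < s] else t.

Definition bjump (A : set R) (t : R) : R :=
  if pselect (exists s, A s /\ s < t) is left _
  then sup [set s | A s /\ s < t] else t.

Definition kappa (A : set R) : set R :=
  [set t | A t /\ ~ ((forall s, A s -> s <= t) /\ bjump A t < t)].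

Definition delta_deriv (T : set R) (f : R -> R) (t D : R) : Prop :=
  forall eps : R, 0 < eps -> exists2 delta : R, 0 < delta &
    forall s, T s -> `|t - s| < delta ->
      `|f (fjump T t) - f s - D * (fjump T t - s)| <= eps * `|fjump T t - s|.

Definition is_ts_exp (T : set R) (k t0 : R) (phi : R -> R) : Prop :=
  phi t0 = 1 /\ forall t, kappa T t -> delta_deriv T phi t (k * phi t).

End TimeScale.

(* Main.v *)
Require Import Defs.
From HB Require Import structures.
From mathcomp Require Import all_boot all_order all_algebra.
From mathcomp Require Import all_classical all_reals all_analysis.
From mathcomp Require Import ring lra.
Set Implicit Arguments. Unset Strict Implicit. Unset Printing Implicit Defensive.
Import Order.TTheory GRing.Theory Num.Theory numFieldNormedType.Exports.
Local Open Scope classical_set_scope.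
Local Open Scope ring_scope.

Section Aux.
Variable R : realType.
Implicit Types (T A : set R) (f : R -> R).

Lemma closed_mem T m : closed T ->
  (forall e : R, 0 < e -> exists x, T x /\ `|m - x| < e) -> T m.
Proof.
move=> cT H; apply: cT => B /nbhs_ballP [e /= e0 sB].
have [x [Tx lt]] := H e e0. exists x; split => //; apply: sB.
by rewrite -ball_normE /ball_ /=.
Qed.

Lemma inf_min A m : A m -> (forall s, A s -> m <= s) -> inf A = m.
Proof.
move=> Am H; apply/le_anti/andP; split.
  by apply: ge_inf => //; exists m.
by apply: lb_le_inf; [exists m | exact: H].
Qed.

Lemma fjump_min T t m : T m -> t < m -> (forall s, T s -> t < s -> m <= s) ->
  fjump T t = m.
Proof.
move=> Tm tm H; rewrite /fjump; case: pselect => [_|n]; last by exfalso; apply: n; exists m.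
by apply: inf_min; [split | move=> s []; apply: H].
Qed.

Lemma fjump_dense T t :
  (forall d : R, 0 < d -> exists s, T s /\ t < s /\ s < t + d) -> fjump T t = t.
Proof.
move=> H; rewrite /fjump; case: pselect => [[s0 [Ts0 ts0]]|//].
have lb : lbound [set s | T s /\ t < s] t by move=> s [_ /ltW].
apply/le_anti/andP; split; last by apply: lb_le_inf => //; exists s0.
rewrite leNgt; apply/negP => lt.
have d0 : 0 < inf [set s | T s /\ t < s] - t by rewrite subr_gt0.
have [s [Ts [ts st]]] := H _ d0.
have : inf [set s | T s /\ t < s] <= s by apply: ge_inf; [exists t|].
by rewrite addrC subrK in st; rewrite leNgt st.
Qed.

Lemma kappa_in A t u : A t -> A u -> t < u -> kappa A t.
Proof. by move=> At Au tu; split => // -[H _]; move: (H u Au); rewrite leNgt tu. Qed.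

Lemma kappa_ld A t : A t ->
  (forall d : R, 0 < d -> exists s, A s /\ t - d < s /\ s < t) -> kappa A t.
Proof.
move=> At H; split => // -[_]; rewrite /bjump; case: pselect => [_|]; last by rewrite ltxx.
set G := [set s | A s /\ s < t] => lt.
have d0 : 0 < t - sup G by rewrite subr_gt0.
have [s [As [ts st]]] := H _ d0.
have : s <= sup G by apply: ub_le_sup; [exists t => x [_ /ltW]|].
by rewrite opprB addrC subrK in ts; rewrite leNgt ts.
Qed.

Lemma small_zero (x c : R) : 0 <= c -> (forall e : R, 0 < e -> `|x| <= e * c) -> x = 0.
Proof.
move=> c0 H; have [->//|x0] := eqVneq x 0.
have nx : 0 < `|x| by rewrite normr_gt0.
have c1 : 0 < c + 1 by lra.
have u0 : 0 < `|x| / (c + 1) by apply: divr_gt0.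
have uE : `|x| / (c + 1) * (c + 1) = `|x| by rewrite divfK // gt_eqF.
have := H _ u0; set u := `|x| / (c + 1) in u0 uE * => h.
exfalso; nra.
Qed.

End Aux.

Section Deriv.
Variable R : realType.
Implicit Types (T A : set R) (f : R -> R).

Definition RX T f (t D : R) := forall e : R, 0 < e -> exists2 d : R, 0 < d &
  forall s, T s -> t < s -> s < t + d -> `|f s - f t - D * (s - t)| <= e * (s - t).

Definition CT T f (t : R) := forall e : R, 0 < e -> exists2 d : R, 0 < d &
  forall s, T s -> `|t - s| < d -> `|f s - f t| <= e.

Lemma dd_rs T f t D : delta_deriv T f t D -> T t ->
  f (fjump T t) = f t + D * (fjump T t - t).
Proof.
move=> H Tt; apply/eqP; rewrite -subr_eq0; apply/eqP.
apply: (@small_zero _ _ `|fjump T t - t|) => // e e0.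
have [d d0 Hd] := H e e0.
have := Hd t Tt; rewrite subrr normr0 => /(_ d0).
by rewrite opprD addrA.
Qed.

Lemma dd_rd T f t D : delta_deriv T f t D -> fjump T t = t -> RX T f t D.
Proof.
move=> H ft e e0; have [d d0 Hd] := H e e0; exists d => // s Ts ts sd.
have ts' : `|t - s| < d by rewrite distrC gtr0_norm ?subr_gt0; lra.
have := Hd s Ts ts'; rewrite ft.
have -> : f t - f s - D * (t - s) = - (f s - f t - D * (s - t)) by ring.
have st0 : 0 < s - t by rewrite subr_gt0.
by rewrite normrN (distrC t s) (gtr0_norm st0).
Qed.

Lemma dd_ct T f t D : delta_deriv T f t D -> T t -> CT T f t.
Proof.
move=> H Tt e e0.
have fs := dd_rs H Tt.
set sg := fjump T t in fs *.
set mu := `|sg - t|.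
have mu0 : 0 <= mu by exact: normr_ge0.
have m1 : 0 < 2 * (mu + 1) by lra.
have nD : 0 <= `|D| by exact: normr_ge0.
have D1 : 0 < 2 * (`|D| + 1) by lra.
have a0 : 0 < e / (2 * (mu + 1)) by apply: divr_gt0.
have aE : e / (2 * (mu + 1)) * (2 * (mu + 1)) = e by rewrite divfK // gt_eqF.
have b0 : 0 < e / (2 * (`|D| + 1)) by apply: divr_gt0.
have bE : e / (2 * (`|D| + 1)) * (2 * (`|D| + 1)) = e by rewrite divfK // gt_eqF.
set a := e / (2 * (mu + 1)) in a0 aE.
set b := e / (2 * (`|D| + 1)) in b0 bE.
have [d1 d10 Hd] := H a a0.
exists (Num.min 1 (Num.min d1 b)).
  by rewrite !lt_min ltr01 d10 b0.
move=> s Ts; rewrite !lt_min => /andP[st1 /andP[st2 st3]].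
have K := Hd s Ts st2; rewrite -/sg in K.
have eq1 : f s - f t = D * (s - t) - (f sg - f s - D * (sg - s)) by rewrite fs; ring.
rewrite eq1.
have h1 : `|D * (s - t) - (f sg - f s - D * (sg - s))| <=
   `|D| * `|t - s| + `|f sg - f s - D * (sg - s)|.
  by apply: le_trans (ler_normB _ _) _; rewrite normrM (distrC s t).
have h2 : `|sg - s| <= mu + `|t - s|.
  have -> : sg - s = (sg - t) + (t - s) by ring.
  exact: ler_normD.
have h3 : 0 <= `|t - s| by exact: normr_ge0.
have h4 : `|D| * `|t - s| <= `|D| * b by apply: ler_wpM2l => //; exact: ltW.
nra.
Qed.

End Deriv.

Section Alg.
Variable R : realType.
Implicit Types (T A : set R) (f g : R -> R).

Lemma norm3 (a b c : R) : `|a + b + c| <= `|a| + `|b| + `|c|.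
Proof.
apply: le_trans (ler_normD _ _) _; rewrite lerD2r; exact: ler_normD.
Qed.

Lemma norm6 (a b c d e f : R) :
  `|a + b + c + d + e + f| <= `|a| + `|b| + `|c| + `|d| + `|e| + `|f|.
Proof.
apply: le_trans (ler_normD _ _) _; rewrite lerD2r.
apply: le_trans (ler_normD _ _) _; rewrite lerD2r.
apply: le_trans (ler_normD _ _) _; rewrite lerD2r.
exact: norm3.
Qed.

Lemma lt_add_min (s t a b : R) : s < t + Num.min a b -> s < t + a /\ s < t + b.
Proof.
have h1 : Num.min a b <= a by rewrite ge_min lexx.
have h2 : Num.min a b <= b by rewrite ge_min lexx orbT.
move=> h; split; lra.
Qed.

Lemma RX_const T t (c : R) : RX T (fun _ => c) t 0.
Proof.
move=> e e0; exists 1 => // s _ ts _; rewrite subrr mul0r subr0 normr0.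
by apply: mulr_ge0; lra.
Qed.

Lemma RX_add T f g t Df Dg : RX T f t Df -> RX T g t Dg ->
  RX T (fun x => f x + g x) t (Df + Dg).
Proof.
move=> Hf Hg e e0.
have e2 : 0 < e / 2 by apply: divr_gt0.
have [d1 d10 H1] := Hf _ e2; have [d2 d20 H2] := Hg _ e2.
exists (Num.min d1 d2); first by rewrite lt_min d10 d20.
move=> s Ts ts /lt_add_min[s1 s2].
have := H1 s Ts ts s1; have := H2 s Ts ts s2 => h2 h1.
have -> : f s + g s - (f t + g t) - (Df + Dg) * (s - t) =
  (f s - f t - Df * (s - t)) + (g s - g t - Dg * (s - t)) by ring.
apply: le_trans (ler_normD _ _) _.
have -> : e * (s - t) = e / 2 * (s - t) + e / 2 * (s - t).
  by rewrite -mulrDl -splitr.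
exact: lerD.
Qed.

Lemma RX_opp T f t D : RX T f t D -> RX T (fun x => - f x) t (- D).
Proof.
move=> Hf e e0; have [d d0 H] := Hf _ e0; exists d => // s Ts ts sd.
have -> : - f s - - f t - - D * (s - t) = - (f s - f t - D * (s - t)) by ring.
by rewrite normrN; exact: H.
Qed.

Lemma RX_mul T f g t Df Dg : RX T f t Df -> RX T g t Dg ->
  RX T (fun x => f x * g x) t (Df * g t + f t * Dg).
Proof.
move=> Hf Hg e e0.
set M := `|f t| + `|g t| + `|Df| + `|Dg| + 1.
have M0 : 0 < M by rewrite /M; have := normr_ge0 (f t); have := normr_ge0 (g t);
  have := normr_ge0 Df; have := normr_ge0 Dg; lra.
set N := `|Df| * `|Dg| + 1.
have N0 : 0 < N by rewrite /N; have := normr_ge0 Df; have := normr_ge0 Dg; nra.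
have a0 : 0 < e / (2 * M) by apply: divr_gt0 => //; lra.
have aE : e / (2 * M) * (2 * M) = e by rewrite divfK // gt_eqF //; lra.
have b0 : 0 < e / (2 * N) by apply: divr_gt0 => //; lra.
have bE : e / (2 * N) * (2 * N) = e by rewrite divfK // gt_eqF //; lra.
set a := e / (2 * M) in a0 aE; set b := e / (2 * N) in b0 bE.
set eta := Num.min 1 a.
have eta0 : 0 < eta by rewrite lt_min ltr01 a0.
have eta1 : eta <= 1 by rewrite ge_min lexx.
have etaa : eta <= a by rewrite ge_min lexx orbT.
have [d1 d10 H1] := Hf _ eta0; have [d2 d20 H2] := Hg _ eta0.
exists (Num.min (Num.min 1 b) (Num.min d1 d2)).
  by rewrite !lt_min ltr01 b0 d10 d20.
move=> s Ts ts /lt_add_min[/lt_add_min[s1 sb] /lt_add_min[s3 s4]].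
have := H1 s Ts ts s3; have := H2 s Ts ts s4.
set h := s - t; set F := f s - f t - Df * h; set G := g s - g t - Dg * h.
move=> hG hF.
have h0 : 0 < h by rewrite /h subr_gt0.
have h1 : h < 1 by rewrite /h; lra.
have hb : h < b by rewrite /h; lra.
have eq1 : f s * g s - f t * g t - (Df * g t + f t * Dg) * h =
   f t * G + F * g t + h * h * (Df * Dg) + h * (Df * G) + h * (F * Dg) + F * G.
  by rewrite /F /G; ring.
rewrite eq1; apply: le_trans (norm6 _ _ _ _ _ _) _.
rewrite !normrM (gtr0_norm h0).
have nF := normr_ge0 F; have nG := normr_ge0 G.
have nf := normr_ge0 (f t); have ng := normr_ge0 (g t).
have nDf := normr_ge0 Df; have nDg := normr_ge0 Dg.
have t1 : `|f t| * `|G| <= `|f t| * (eta * h) by apply: ler_wpM2l.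
have t2 : `|F| * `|g t| <= (eta * h) * `|g t| by apply: ler_wpM2r.
have t4 : h * (`|Df| * `|G|) <= h * (`|Df| * (eta * h)).
  by apply: ler_wpM2l; [lra | apply: ler_wpM2l].
have t5 : h * (`|F| * `|Dg|) <= h * ((eta * h) * `|Dg|).
  by apply: ler_wpM2l; [lra | apply: ler_wpM2r].
have t6 : `|F| * `|G| <= (eta * h) * (eta * h) by apply: ler_pM.
have u1 : h * (`|Df| * (eta * h)) <= h * (`|Df| * eta).
  apply: ler_wpM2l; [lra | apply: ler_wpM2l => //]; nra.
have u2 : h * ((eta * h) * `|Dg|) <= h * (eta * `|Dg|).
  apply: ler_wpM2l; [lra | apply: ler_wpM2r => //]; nra.
have x0 : 0 <= eta * h by apply: mulr_ge0; lra.
have x1 : eta * h <= 1.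
  have : eta * h <= 1 * 1 by apply: ler_pM; lra.
  by rewrite mulr1.
have u3 : (eta * h) * (eta * h) <= eta * h.
  have : (eta * h) * (eta * h) <= (eta * h) * 1 by apply: ler_wpM2l.
  by rewrite mulr1.
have u4 : h * h * (`|Df| * `|Dg|) <= h * (b * (`|Df| * `|Dg|)).
  rewrite -mulrA; apply: ler_wpM2l; [lra | apply: ler_wpM2r; [nra | lra]].
have u5 : eta * M <= e / 2 by nra.
have u6 : b * (`|Df| * `|Dg|) <= e / 2 by rewrite /N in bE; nra.
have ee : e = e / 2 + e / 2 by rewrite -splitr.
rewrite /M in u5.
nra.
Qed.

Lemma RX_ge T g t D : RX T g t D -> 0 < D ->
  exists2 d : R, 0 < d & forall s, T s -> t < s -> s < t + d -> g t <= g s.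
Proof.
move=> H D0; have [d d0 Hd] := H D D0; exists d => // s Ts ts sd.
have := Hd s Ts ts sd; rewrite ler_norml => /andP[h _].
have : 0 <= D * (s - t) by apply: mulr_ge0; lra.
lra.
Qed.

Lemma CT_const T t (c : R) : CT T (fun _ => c) t.
Proof. by move=> e e0; exists 1 => // s _ _; rewrite subrr normr0 ltW. Qed.

Lemma CT_add T f g t : CT T f t -> CT T g t -> CT T (fun x => f x + g x) t.
Proof.
move=> Hf Hg e e0.
have e2 : 0 < e / 2 by apply: divr_gt0.
have [d1 d10 H1] := Hf _ e2; have [d2 d20 H2] := Hg _ e2.
exists (Num.min d1 d2); first by rewrite lt_min d10 d20.
move=> s Ts; rewrite lt_min => /andP[s1 s2].
have := H1 s Ts s1; have := H2 s Ts s2 => h2 h1.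
have -> : f s + g s - (f t + g t) = (f s - f t) + (g s - g t) by ring.
apply: le_trans (ler_normD _ _) _.
rewrite [e]splitr; exact: lerD.
Qed.

Lemma CT_opp T f t : CT T f t -> CT T (fun x => - f x) t.
Proof.
move=> Hf e e0; have [d d0 H] := Hf _ e0; exists d => // s Ts sd.
by rewrite -opprD normrN; exact: H.
Qed.

Lemma CT_mul T f g t : CT T f t -> CT T g t -> CT T (fun x => f x * g x) t.
Proof.
move=> Hf Hg e e0.
set M := `|f t| + `|g t| + 1.
have M0 : 0 < M by rewrite /M; have := normr_ge0 (f t); have := normr_ge0 (g t); lra.
have a0 : 0 < e / M by apply: divr_gt0.
have aE : e / M * M = e by rewrite divfK // gt_eqF.
set a := e / M in a0 aE.
set eta := Num.min 1 a.
have eta0 : 0 < eta by rewrite lt_min ltr01 a0.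
have eta1 : eta <= 1 by rewrite ge_min lexx.
have etaa : eta <= a by rewrite ge_min lexx orbT.
have [d1 d10 H1] := Hf _ eta0; have [d2 d20 H2] := Hg _ eta0.
exists (Num.min d1 d2); first by rewrite lt_min d10 d20.
move=> s Ts; rewrite lt_min => /andP[s1 s2].
have := H1 s Ts s1; have := H2 s Ts s2.
set F := f s - f t; set G := g s - g t => hG hF.
have -> : f s * g s - f t * g t = F * G + F * g t + f t * G by rewrite /F /G; ring.
apply: le_trans (norm3 _ _ _) _; rewrite !normrM.
have nF := normr_ge0 F; have nG := normr_ge0 G.
have nf := normr_ge0 (f t); have ng := normr_ge0 (g t).
have t1 : `|F| * `|G| <= eta * eta by apply: ler_pM.
have t2 : `|F| * `|g t| <= eta * `|g t| by apply: ler_wpM2r.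
have t3 : `|f t| * `|G| <= `|f t| * eta by apply: ler_wpM2l.
have u : eta * M <= e by nra.
rewrite /M in u; nra.
Qed.

Lemma CT_ge T g t (c : R) : CT T g t ->
  (forall d : R, 0 < d -> exists s, T s /\ `|t - s| < d /\ c <= g s) -> c <= g t.
Proof.
move=> H Hs; rewrite leNgt; apply/negP => lt.
have e0 : 0 < (c - g t) / 2 by apply: divr_gt0 => //; lra.
have [d d0 Hd] := H _ e0.
have [s [Ts [ds cs]]] := Hs d d0.
have := Hd s Ts ds; rewrite ler_norml => /andP[_ h].
have : (c - g t) / 2 * 2 = c - g t by rewrite divfK.
lra.
Qed.

End Alg.

Section Ind.
Variable R : realType.

Lemma ts_induction (T : set R) (t0 b : R) (P : R -> Prop) :
  closed T -> T t0 ->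
  P t0 ->
  (forall t m, T t -> t0 <= t -> t < m -> T m -> m <= b ->
     (forall s, T s -> t < s -> m <= s) -> P t -> P m) ->
  (forall t, T t -> t0 <= t -> t < b ->
     (forall d : R, 0 < d -> exists s, T s /\ t < s /\ s < t + d) -> P t ->
     exists2 d : R, 0 < d & forall s, T s -> t < s -> s < t + d -> P s) ->
  (forall t, T t -> t0 < t -> t <= b ->
     (forall d : R, 0 < d -> exists s, T s /\ t0 <= s /\ t - d < s /\ s < t) ->
     (forall s, T s -> t0 <= s -> s < t -> P s) -> P t) ->
  forall t, T t -> t0 <= t -> t <= b -> P t.
Proof.
move=> cT Tt0 P0 HRS HRD HLD t Tt t0t tb.
apply: contrapT => nPt.
set F := [set s | T s /\ t0 <= s /\ s <= b /\ ~ P s].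
have Ft : F t by [].
have lbF : lbound F t0 by move=> s [_ [h _]].
have hlF : has_lbound F by exists t0.
have neF : F !=set0 by exists t.
set m := inf F.
have mt : m <= t by apply: ge_inf.
have t0m : t0 <= m by apply: lb_le_inf.
have mb : m <= b by apply: le_trans mt tb.
have adh : forall e : R, 0 < e -> exists2 x, F x & x < m + e.
  by move=> e e0; apply: inf_adherent.
have Tm : T m.
  apply: closed_mem => // e e0; have [x Fx xe] := adh e e0.
  exists x; split; first exact: Fx.1.
  have : m <= x by apply: ge_inf.
  by move=> h; rewrite distrC ger0_norm ?subr_ge0 //; lra.
have key : forall s, T s -> t0 <= s -> s < m -> P s.
  move=> s Ts t0s sm; apply: contrapT => nPs.
  have : m <= s by apply: ge_inf => //; split => //; split => //; split => //; lra.
  lra.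
have Pm : P m.
  have [e|t0m'] := eqVneq m t0; first by rewrite e.
  have {t0m'} t0m' : t0 < m by rewrite lt_neqAle eq_sym t0m' t0m.
  have [LD|nLD] := pselect (forall d : R, 0 < d -> exists s, T s /\ t0 <= s /\ m - d < s /\ s < m).
    by apply: HLD.
  have [d [d0 nd]] : exists d : R, 0 < d /\ forall s, T s -> t0 <= s -> m - d < s -> s < m -> False.
    apply: contrapT => H; apply: nLD => d d0; apply: contrapT => H2; apply: H.
    exists d; split => // s Ts t0s ms sm; apply: H2; exists s; split => //.
  set G := [set s | T s /\ t0 <= s /\ s < m].
  have Gt0 : G t0 by [].
  have ubG : ubound G (m - d).
    move=> s [Ts [t0s sm]]; rewrite leNgt; apply/negP => h; exact: (nd s).
  have hsG : has_sup G by split; [exists t0 | exists (m - d)].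
  set r := sup G.
  have rmd : r <= m - d by apply: ge_sup => //; exists t0.
  have t0r : t0 <= r by apply: sup_upper_bound.
  have Tr : T r.
    apply: closed_mem => // e e0; have [x Gx xe] := sup_adherent e0 hsG.
    exists x; split; first exact: Gx.1.
    have : x <= r by apply: sup_upper_bound.
    by move=> h; rewrite ger0_norm ?subr_ge0 //; rewrite -/r in xe; lra.
  apply: (HRS r m) => //; first by lra.
    move=> s Ts rs; rewrite leNgt; apply/negP => sm.
    have : s <= r by apply: sup_upper_bound => //; split => //; split => //; lra.
    lra.
  by apply: key => //; lra.
have nFm : ~ F m by case=> _ [_ [_]].
have adh2 : forall e : R, 0 < e -> exists2 x, F x & m < x /\ x < m + e.
  move=> e e0; have [x Fx xe] := adh e e0; exists x => //; split => //.
  have : m <= x by apply: ge_inf.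
  rewrite le_eqVlt => /orP[/eqP mx|//]; by rewrite mx in nFm.
have [x1 [Tx1 [_ [x1b _]]] [mx1 _]] := adh2 1 ltr01.
have RDc : forall d : R, 0 < d -> exists s, T s /\ m < s /\ s < m + d.
  by move=> e e0; have [x [Tx _] [mx xe]] := adh2 e e0; exists x.
have [d d0 Hd] := HRD m Tm t0m (lt_le_trans mx1 x1b) RDc Pm.
have [x [Tx [_ [_ nPx]]] [mx xd]] := adh2 d d0.
by apply: nPx; apply: Hd.
Qed.

End Ind.

Section Main.
Variable R : realType.

Lemma alg_key (a b c p q : R) : c + p * b + q * a = 0 ->
  2 * (b * a + c * b) <= (1 + 2 * `|p| + `|q|) * (a * a + b * b) /\
  b * b + c * c <= (1 + `|p| + `|q|) ^+ 2 * (a * a + b * b).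
Proof.
move=> ode.
have ce : c = - (p * b) - q * a by lra.
rewrite ce.
have np := normr_ge0 p; have nq := normr_ge0 q.
have pp : p <= `|p| by exact: ler_norm.
have pn : - p <= `|p| by rewrite -normrN; exact: ler_norm.
have qp : q <= `|q| by exact: ler_norm.
have qn : - q <= `|q| by rewrite -normrN; exact: ler_norm.
have p2 : p * p = `|p| * `|p| by rewrite -normrM ger0_norm // -expr2 sqr_ge0.
have q2 : q * q = `|q| * `|q|.
  by rewrite -normrM ger0_norm // -expr2 sqr_ge0.
have h1 : 2 * (b * a) <= a * a + b * b.
  have : 0 <= (a - b) * (a - b) by rewrite -expr2 sqr_ge0.
  lra.
have h2 : - (2 * (p * b * b)) <= 2 * `|p| * (b * b).
  have bb : 0 <= b * b by rewrite -expr2 sqr_ge0.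
  have : (- p) * (b * b) <= `|p| * (b * b) by apply: ler_wpM2r.
  lra.
have h3 : - (2 * (q * a * b)) <= `|q| * (a * a + b * b).
  have h3a : 0 <= `|q| * ((a - b) * (a - b)) by apply: mulr_ge0 => //; rewrite -expr2 sqr_ge0.
  have h3b : 0 <= `|q| * ((a + b) * (a + b)) by apply: mulr_ge0 => //; rewrite -expr2 sqr_ge0.
  have [q0|q0] := leP 0 q.
    rewrite (ger0_norm q0) in h3b *; nra.
  rewrite (ltr0_norm q0) in h3a *; nra.
split; first nra.
have cs : (p * b + q * a) * (p * b + q * a) <= (p * p + q * q) * (a * a + b * b).
  have : 0 <= (p * a - q * b) * (p * a - q * b) by rewrite -expr2 sqr_ge0.
  nra.
have : (- (p * b) - q * a) * (- (p * b) - q * a) = (p * b + q * a) * (p * b + q * a) by ring.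
move=> ->.
have pq : 1 + p * p + q * q <= (1 + `|p| + `|q|) ^+ 2.
  rewrite p2 q2 expr2; have := mulr_ge0 np nq; nra.
have v0 : 0 <= a * a + b * b by rewrite -!expr2; apply: addr_ge0; apply: sqr_ge0.
nra.
Qed.

Lemma alg_rs (a b c p q mu V : R) : 0 <= mu -> c + p * b + q * a = 0 ->
  a * a + b * b <= V ->
  (a + b * mu) * (a + b * mu) + (b + c * mu) * (b + c * mu)
    <= (1 + (1 + `|p| + `|q|) * mu) ^+ 2 * V.
Proof.
move=> mu0 ode hV; have [k1 k2] := alg_key ode.
set k := 1 + `|p| + `|q| in k2 *.
have np := normr_ge0 p; have nq := normr_ge0 q.
have W0 : 0 <= a * a + b * b by rewrite -!expr2; apply: addr_ge0; apply: sqr_ge0.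
set W := a * a + b * b in k1 k2 hV W0.
have e : (a + b * mu) * (a + b * mu) + (b + c * mu) * (b + c * mu) =
  W + mu * (2 * (b * a + c * b)) + mu * mu * (b * b + c * c) by rewrite /W; ring.
rewrite e.
have s1 : mu * (2 * (b * a + c * b)) <= mu * ((2 * k) * W).
  apply: ler_wpM2l => //; apply: le_trans k1 _; apply: ler_wpM2r => //; rewrite /k; lra.
have s2 : mu * mu * (b * b + c * c) <= mu * mu * (k ^+ 2 * W).
  by apply: ler_wpM2l => //; apply: mulr_ge0.
have s3 : (1 + k * mu) ^+ 2 * W <= (1 + k * mu) ^+ 2 * V.
  by apply: ler_wpM2l => //; apply: sqr_ge0.
apply: le_trans s3; rewrite expr2 in s2 *; nra.
Qed.

Lemma eps_le (a b c : R) : 0 <= c -> (forall e : R, 0 < e -> a <= b + e * c) -> a <= b.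
Proof.
move=> c0 H; rewrite leNgt; apply/negP => lt.
have c1 : 0 < c + 1 by lra.
have e0 : 0 < (a - b) / (c + 1) by apply: divr_gt0 => //; lra.
have eE : (a - b) / (c + 1) * (c + 1) = a - b by rewrite divfK // gt_eqF.
have := H _ e0; set e := (a - b) / (c + 1) in e0 eE *; nra.
Qed.

End Main.

Lemma alg_rd (R : realType) (a b c p q E K : R) : c + p * b + q * a = 0 ->
  0 < K -> 1 <= E -> a * a + b * b <= K * (E * E) ->
  0 < 0 * (E * E) + K * ((1 + `|p| + `|q|) * E * E + E * ((1 + `|p| + `|q|) * E))
      + - ((b * a + a * b) + (c * b + b * c)).
Proof.
move=> ode K0 E1 hV; have [k1 _] := alg_key ode.
set k := 1 + `|p| + `|q|.
have np := normr_ge0 p; have nq := normr_ge0 q.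
set W := a * a + b * b in k1 hV.
have EE : 1 <= E * E by nra.
have KE : K <= K * (E * E) by nra.
have k1' : (b * a + a * b) + (c * b + b * c) <= (2 * k - 1) * W.
  have -> : (b * a + a * b) + (c * b + b * c) = 2 * (b * a + c * b) by ring.
  apply: le_trans k1 _; apply: ler_wpM2r; last by rewrite /k; lra.
  by rewrite /W -!expr2; apply: addr_ge0; apply: sqr_ge0.
have k0 : 1 <= 2 * k - 1 by rewrite /k; lra.
have s : (2 * k - 1) * W <= (2 * k - 1) * (K * (E * E)) by apply: ler_wpM2l => //; lra.
have -> : 0 * (E * E) + K * (k * E * E + E * (k * E)) = 2 * k * (K * (E * E)) by ring.
nra.
Qed.

Unset Implicit Arguments.

Theorem theorem2p2 (R : realType) (T I : set R) (t0 p q : R)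
    (y yd ydd ek : R -> R) :
  time_scale T -> is_interval I -> (I `&` T) t0 ->
  (forall t, kappa (I `&` T) t -> delta_deriv T y t (yd t)) ->
  (forall t, kappa (kappa (I `&` T)) t -> delta_deriv T yd t (ydd t)) ->
  (forall t, kappa (kappa (I `&` T)) t -> ydd t + p * yd t + q * y t = 0) ->
  is_ts_exp T (1 + `|p| + `|q|) t0 ek ->
  forall t, kappa (I `&` T) t -> t0 <= t ->
    Num.sqrt (y t ^+ 2 + yd t ^+ 2)
      <= Num.sqrt (y t0 ^+ 2 + yd t0 ^+ 2) * ek t.
Proof.
move=> [_ cT] hI [It0 Tt0] Hy Hyd Hode [E0 HE] b Kb t0b.
set S := I `&` T.
have [Ib Tb] : S b by case: Kb.
set k := 1 + `|p| + `|q|.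
have np := normr_ge0 p; have nq := normr_ge0 q.
have k1 : 1 <= k by rewrite /k; lra.
set C := y t0 * y t0 + yd t0 * yd t0.
have C0 : 0 <= C by rewrite /C -!expr2; apply: addr_ge0; apply: sqr_ge0.
have inS : forall s, T s -> t0 <= s -> s <= b -> S s.
  move=> s Ts t0s sb; split => //; apply: (hI t0 b) => //; by rewrite t0s sb.
have inK : forall x, T x -> t0 <= x -> x < b -> kappa S x.
  move=> x Tx t0x xb; apply: (@kappa_in _ S x b) => //; apply: inS => //; lra.
have inKK : forall s, T s -> t0 <= s -> s < b -> kappa (kappa S) s.
  move=> s Ts t0s sb; apply: (@kappa_in _ (kappa S) s b) => //; exact: inK.
have inKT : forall s, T s -> s < b -> kappa T s.
  by move=> s Ts sb; apply: (@kappa_in _ T s b).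
suff main : forall eps : R, 0 < eps ->
    1 <= ek b /\ 0 <= (C + eps) * (ek b * ek b) + - (y b * y b + yd b * yd b).
  have [E1 _] := main 1 ltr01.
  have hV : y b ^+ 2 + yd b ^+ 2 <= C * ek b ^+ 2.
    apply: (@eps_le _ _ _ (ek b ^+ 2)); first exact: sqr_ge0.
    move=> e e0; have [_ h] := main e e0; rewrite !expr2; lra.
  have -> : Num.sqrt (y t0 ^+ 2 + yd t0 ^+ 2) * ek b = Num.sqrt (C * ek b ^+ 2).
    rewrite sqrtrM // sqrtr_sqr ger0_norm; last lra.
    by rewrite /C !expr2.
  exact: ler_wsqrtr.
move=> eps eps0.
set g2 := fun x => (C + eps) * (ek x * ek x) + - (y x * y x + yd x * yd x).
pose P := fun s => 1 <= ek s /\ 0 <= g2 s.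
have Pb : P b; last by [].
apply: (@ts_induction _ T t0 b P cT Tt0) => //.
- split; first by rewrite E0.
  rewrite /g2 E0 /C mulr1; lra.
- move=> t m Tt t0t tm Tm mb nob [E1 G1].
  have fj : fjump T t = m by apply: fjump_min.
  have tb : t < b by lra.
  have hy := dd_rs (Hy t (inK t Tt t0t tb)) Tt.
  have hyd := dd_rs (Hyd t (inKK t Tt t0t tb)) Tt.
  have hE := dd_rs (HE t (inKT t Tt tb)) Tt.
  have ode := Hode t (inKK t Tt t0t tb).
  rewrite fj in hy hyd hE.
  have mu0 : 0 <= m - t by lra.
  rewrite /P /g2 hy hyd hE.
  have kE : 0 <= k * ek t * (m - t) by apply: mulr_ge0 => //; apply: mulr_ge0; lra.
  split; first by rewrite -/k; lra.
  rewrite -/k.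
  have hV : y t * y t + yd t * yd t <= (C + eps) * (ek t * ek t) by rewrite /g2 in G1; lra.
  have := alg_rs mu0 ode hV; rewrite -/k => h.
  have -> : (ek t + k * ek t * (m - t)) * (ek t + k * ek t * (m - t)) =
      (1 + k * (m - t)) ^+ 2 * (ek t * ek t) by ring.
  have -> : (C + eps) * ((1 + k * (m - t)) ^+ 2 * (ek t * ek t)) =
      (1 + k * (m - t)) ^+ 2 * ((C + eps) * (ek t * ek t)) by ring.
  lra.
- move=> t Tt t0t tb dense [E1 G1].
  have fj : fjump T t = t by apply: fjump_dense.
  have Ry := dd_rd (Hy t (inK t Tt t0t tb)) fj.
  have Ryd := dd_rd (Hyd t (inKK t Tt t0t tb)) fj.
  have RE := dd_rd (HE t (inKT t Tt tb)) fj.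
  have ode := Hode t (inKK t Tt t0t tb).
  have Rg2 := RX_add (RX_mul (RX_const T t (C + eps)) (RX_mul RE RE))
     (RX_opp (RX_add (RX_mul Ry Ry) (RX_mul Ryd Ryd))).
  have kE0 : 0 < k * ek t by apply: mulr_gt0; lra.
  have [d1 d10 H1] := RX_ge RE kE0.
  have hV : y t * y t + yd t * yd t <= (C + eps) * (ek t * ek t) by rewrite /g2 in G1; lra.
  have D0 := alg_rd ode (ltac:(lra) : 0 < C + eps) E1 hV.
  have [d2 d20 H2] := RX_ge Rg2 D0.
  exists (Num.min d1 d2); first by rewrite lt_min d10 d20.
  move=> s Ts ts /lt_add_min[s1 s2]; split.
    by apply: le_trans E1 _; apply: H1.
  by apply: le_trans G1 _; apply: H2.
- move=> t Tt t0t tb appr before.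
  have Kt : kappa S t.
    move: tb; rewrite le_eqVlt => /orP[/eqP ->|tb] //; apply: inK => //; lra.
  have KKt : kappa (kappa S) t.
    apply: kappa_ld => // d d0; have [s [Ts [t0s [ds st]]]] := appr d d0.
    exists s; split => //; apply: inK => //; lra.
  have KTt : kappa T t.
    apply: kappa_ld => // d d0; have [s [Ts [t0s [ds st]]]] := appr d d0.
    by exists s.
  have Cy := dd_ct (Hy t Kt) Tt.
  have Cyd := dd_ct (Hyd t KKt) Tt.
  have CE := dd_ct (HE t KTt) Tt.
  have Cg2 := CT_add (CT_mul (CT_const T t (C + eps)) (CT_mul CE CE))
     (CT_opp (CT_add (CT_mul Cy Cy) (CT_mul Cyd Cyd))).
  have near : forall d : R, 0 < d -> exists s, T s /\ `|t - s| < d /\ P s.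
    move=> d d0; have [s [Ts [t0s [ds st]]]] := appr d d0.
    exists s; split => //; split; last by apply: before.
    by rewrite gtr0_norm; lra.
  split.
    apply: CT_ge CE _ => d d0; have [s [Ts [ds [Ps _]]]] := near d d0.
    by exists s.
  apply: (CT_ge Cg2) => d d0; have [s [Ts [ds [_ Ps]]]] := near d d0.
  by exists s.
Qed.
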